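(* Fix all system parameters except the RIS reflection vector $\boldsymbol{\omega}\in\mathbb{C}^{N_\mathrm{r}}$, and write $\mathbf{J}_{\boldsymbol{\gamma}}(\boldsymbol{\omega})$ for the Fisher information matrix defined in the context. Then $\mathbf{J}_{\boldsymbol{\gamma}}(\boldsymbol{\omega})$ depends on $\boldsymbol{\omega}$ only through the three scalars $\mathbf{B}^\mathrm{H}\boldsymbol{\omega}=\big[\mathbf{b}_\mathrm{r}^\mathrm{T}(\boldsymbol{\phi}_\mathrm{ru})\boldsymbol{\omega},\ \tfrac{\partial \mathbf{b}_\mathrm{r}^\mathrm{T}(\boldsymbol{\phi}_\mathrm{ru})}{\partial\phi_\mathrm{ru}^{\mathrm{az}}}\boldsymbol{\omega},\ \tfrac{\partial \mathbf{b}_\mathrm{r}^\mathrm{T}(\boldsymbol{\phi}_\mathrm{ru})}{\partial\phi_\mathrm{ru}^{\mathrm{el}}}\boldsymbol{\omega}\big]^\mathrm{T}$. In particular, it does not depend on the component $\boldsymbol{\Pi}_\mathbf{B}^\perp\boldsymbol{\omega}$: if $\boldsymbol{\Pi}_\mathbf{B}\boldsymbol{\omega}_1=\boldsymbol{\Pi}_\mathbf{B}\boldsymbol{\omega}_2$, then $\mathbf{J}_{\boldsymbol{\gamma}}(\boldsymbol{\omega}_1)=\mathbf{J}_{\boldsymbol{\gamma}}(\boldsymbol{\omega}_2)$, and consequently $\mathbf{J}_{\boldsymbol{\eta}}(\boldsymbol{\omega}_1)=\mathbf{J}_{\boldsymbol{\eta}}(\boldsymbol{\omega}_2)$.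
   Context: Setting: a LEO satellite with a uniform planar array of $N_\mathrm{s}$ antennas, whose element coordinates in its body frame are the columns of $\mathbf{P}_\mathrm{s}\in\mathbb{R}^{3\times N_\mathrm{s}}$. An RIS with $N_\mathrm{r}$ elements, whose coordinates in its body frame are the columns of $\mathbf{P}_\mathrm{r}\in\mathbb{R}^{3\times N_\mathrm{r}}$. A single-antenna UE. For an angle pair $\boldsymbol{\theta}=[\theta^{\mathrm{az}},\theta^{\mathrm{el}}]^\mathrm{T}$, let $\mathbf{t}(\boldsymbol{\theta})=[\cos\theta^{\mathrm{az}}\cos\theta^{\mathrm{el}},\ \sin\theta^{\mathrm{az}}\cos\theta^{\mathrm{el}},\ \sin\theta^{\mathrm{el}}]^\mathrm{T}$. The steering vectors are $\mathbf{a}_\mathrm{s}(\boldsymbol{\theta})=\exp(-j\tfrac{2\pi f_c}{c}\mathbf{P}_\mathrm{s}^\mathrm{T}\mathbf{t}(\boldsymbol{\theta}))$ and $\mathbf{a}_\mathrm{r}(\boldsymbol{\phi})=\exp(-j\tfrac{2\pi f_c}{c}\mathbf{P}_\mathrm{r}^\mathrm{T}\mathbf{t}(\boldsymbol{\phi}))$, with the exponential applied entrywise, where $f_c$ is the carrier frequency and $c$ is the speed of light. The RIS reflection vector is $\boldsymbol{\omega}\in\mathbb{C}^{N_\mathrm{r}}$. The channel at time $t$ and frequency $f$ is the row vector $\mathbf{h}^\mathrm{T}(t,f)=\alpha_\mathrm{su}e^{j2\pi(t\nu_\mathrm{su}-f\tau_\mathrm{su})}\mathbf{a}_\mathrm{s}^\mathrm{T}(\boldsymbol{\theta}_\mathrm{su})+\alpha_\mathrm{sru}e^{j2\pi(t\nu_\mathrm{sr}-f\tau_\mathrm{sru})}\mathbf{a}_\mathrm{r}^\mathrm{T}(\boldsymbol{\phi}_\mathrm{ru})\,\mathrm{diag}(\boldsymbol{\omega})\,\mathbf{a}_\mathrm{r}(\boldsymbol{\phi}_\mathrm{sr})\mathbf{a}_\mathrm{s}^\mathrm{T}(\boldsymbol{\theta}_\mathrm{sr}).$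 Here $\alpha_\mathrm{su},\alpha_\mathrm{sru}\in\mathbb{C}$ are gains, $\tau_\mathrm{su},\tau_\mathrm{sru}$ are delays, and $\nu_\mathrm{su},\nu_\mathrm{sr}$ are Doppler shifts. The angle pairs are $\boldsymbol{\theta}_\mathrm{su},\boldsymbol{\theta}_\mathrm{sr}$ (angles of departure at the satellite), $\boldsymbol{\phi}_\mathrm{sr}$ (angle of arrival at the RIS) and $\boldsymbol{\phi}_\mathrm{ru}$ (angle of departure from the RIS toward the UE). The quantities $\boldsymbol{\theta}_\mathrm{sr},\boldsymbol{\phi}_\mathrm{sr},\nu_\mathrm{sr}$ are known. Observations: $M$ transmissions with period $T$, and $N$ subcarriers with spacing $\Delta f$. The noise-free received sample is $\mu_m[n]=\sqrt{P}\,\mathbf{h}^\mathrm{T}(mT,n\Delta f)\mathbf{f}_m s_m[n]$, where $P>0$ is the power, $\mathbf{f}_m\in\mathbb{C}^{N_\mathrm{s}}$ are known precoders, and $s_m[n]$ are known pilot symbols. The noise is i.i.d. $\mathcal{CN}(0,\sigma^2)$. Channel parameter vector: $\boldsymbol{\gamma}=[\tau_\mathrm{su},\theta_\mathrm{su}^{\mathrm{az}},\theta_\mathrm{su}^{\mathrm{el}},\tau_\mathrm{sru},\phi_\mathrm{ru}^{\mathrm{az}},\phi_\mathrm{ru}^{\mathrm{el}},\nu_\mathrm{su},\Re\alpha_\mathrm{su},\Im\alpha_\mathrm{su},\Re\alpha_\mathrm{sru},\Im\alpha_\mathrm{sru}]^\mathrm{T}\in\mathbb{R}^{11}.$ Its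 Fisher information matrix is $\mathbf{J}_{\boldsymbol{\gamma}}=\frac{2}{\sigma^2}\sum_{m=1}^M\sum_{n=1}^N\Re\Big\{\frac{\partial\mu_m[n]}{\partial\boldsymbol{\gamma}}\Big(\frac{\partial\mu_m[n]}{\partial\boldsymbol{\gamma}}\Big)^\mathrm{H}\Big\}.$ Location parameter vector: $\boldsymbol{\eta}=[\mathbf{p}_\mathrm{u}^\mathrm{T},\Delta,\Re\alpha_\mathrm{su},\Im\alpha_\mathrm{su},\Re\alpha_\mathrm{sru},\Im\alpha_\mathrm{sru}]^\mathrm{T}\in\mathbb{R}^8$, where $\mathbf{p}_\mathrm{u}$ is the UE position and $\Delta$ is a clock offset. The vector $\boldsymbol{\gamma}$ is a smooth function of $\boldsymbol{\eta}$ given the known satellite position $\mathbf{p}_\mathrm{s}$, satellite velocity $\boldsymbol{v}$, RIS position $\mathbf{p}_\mathrm{r}$, and the known orientations. Specifically: - $\tau_\mathrm{su}=\|\mathbf{p}_\mathrm{s}-\mathbf{p}_\mathrm{u}\|/c+\Delta$; - $\tau_\mathrm{sru}=(\|\mathbf{p}_\mathrm{s}-\mathbf{p}_\mathrm{r}\|+\|\mathbf{p}_\mathrm{r}-\mathbf{p}_\mathrm{u}\|)/c+\Delta$; - $\nu_\mathrm{su}=\boldsymbol{v}^\mathrm{T}(\mathbf{p}_\mathrm{u}-\mathbf{p}_\mathrm{s})/(\lambda\|\mathbf{p}_\mathrm{u}-\mathbf{p}_\mathrm{s}\|)$, with $\lambda$ the wavelength; - $\boldsymbol{\theta}_\mathrm{su}$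 and $\boldsymbol{\phi}_\mathrm{ru}$ are the directions of $\mathbf{p}_\mathrm{u}$ as seen from the satellite and from the RIS in their respective body frames. With $\mathbf{T}=\partial\boldsymbol{\gamma}^\mathrm{T}/\partial\boldsymbol{\eta}\in\mathbb{R}^{8\times 11}$, which does not depend on $\boldsymbol{\omega}$, define $\mathbf{J}_{\boldsymbol{\eta}}=\mathbf{T}\mathbf{J}_{\boldsymbol{\gamma}}\mathbf{T}^\mathrm{T}$ and $\mathrm{PEB}=\sqrt{\mathrm{tr}([\mathbf{J}_{\boldsymbol{\eta}}^{-1}]_{1:3,1:3})}$. Further notation. Let $\mathbf{b}_\mathrm{r}(\boldsymbol{\phi})=\mathbf{a}_\mathrm{r}(\boldsymbol{\phi})\odot\mathbf{a}_\mathrm{r}(\boldsymbol{\phi}_\mathrm{sr})$, where $\odot$ is the Hadamard product. Let $\mathbf{B}=\big[\mathbf{b}_\mathrm{r}^*(\boldsymbol{\phi}_\mathrm{ru}),\ \tfrac{\partial\mathbf{b}_\mathrm{r}^*(\boldsymbol{\phi}_\mathrm{ru})}{\partial\phi_\mathrm{ru}^{\mathrm{az}}},\ \tfrac{\partial\mathbf{b}_\mathrm{r}^*(\boldsymbol{\phi}_\mathrm{ru})}{\partial\phi_\mathrm{ru}^{\mathrm{el}}}\big]\in\mathbb{C}^{N_\mathrm{r}\times 3}$, assumed to have full column rank. Let $\boldsymbol{\Pi}_\mathbf{B}=\mathbf{B}(\mathbf{B}^\mathrm{H}\mathbf{B})^{-1}\mathbf{B}^\mathrm{H}$ and $\boldsymbol{\Pi}_\mathbf{B}^\perp=\mathbf{I}-\boldsymbol{\Pi}_\mathbf{B}$.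 *)

(* Defs.v *)
From HB Require Import structures.
From mathcomp Require Import all_boot all_order all_algebra.
From mathcomp Require Import all_classical all_reals.
From mathcomp Require Import topology normedtype derive sequences exp trigo.
From mathcomp Require Import complex.
Set Implicit Arguments. Unset Strict Implicit. Unset Printing Implicit Defensive.
Import Order.TTheory GRing.Theory Num.Theory.
Import numFieldNormedType.Exports.
Local Open Scope ring_scope.

Definition expj {R : realType} (x : R) : R[i] := Complex (cos x) (sin x).

Definition cderiv {R : realType} (g : R -> R[i]) (x : R) : R[i] :=
  Complex (derive1 (fun y => @complex.Re R (g y)) x) (derive1 (fun y => @complex.Im R (g y)) x).

Definition hadj {R : realType} m n (A : 'M[R[i]]_(m, n)) : 'M[R[i]]_(n, m) :=
  (map_mx conjc A)^T.

Definition updc {R : realType} n (v : 'cV[R]_n) (i : 'I_n) (x : R) : 'cV[R]_n :=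
  \col_j (if j == i then x else v j 0).

Definition vnorm {R : realType} (v : 'cV[R]_3) : R :=
  Num.sqrt (\sum_i (v i 0) ^+ 2).
Definition vdot {R : realType} (v w : 'cV[R]_3) : R := (v^T *m w) 0 0.

Definition atan2 {R : realType} (y x : R) : R :=
  if 0 < x then atan (y / x)
  else if x < 0 then (if 0 <= y then atan (y / x) + pi else atan (y / x) - pi)
  else if 0 < y then pi / 2 else if y < 0 then - (pi / 2) else 0.

Definition tvec {R : realType} (az el : R) : 'cV[R]_3 :=
  \col_(i < 3) nth 0 [:: cos az * cos el; sin az * cos el; sin el] i.

(* angle pair (az, el) of a vector d, so that t(az, el) = d / |d| *)
Definition dir_az {R : realType} (d : 'cV[R]_3) : R := atan2 (d 1 0) (d 0 0).
Definition dir_el {R : realType} (d : 'cV[R]_3) : R := asin (d 2 0 / vnorm d).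

Record sysParams (R : realType) := SysParams {
  fc : R;
  cl : R;
  Ns : nat;
  Nr : nat;
  Ps : 'M[R]_(3, Ns);           (* satellite element coordinates (body frame) *)
  Pr : 'M[R]_(3, Nr);           (* RIS element coordinates (body frame) *)
  th_sr_az : R; th_sr_el : R;
  ph_sr_az : R; ph_sr_el : R;
  nu_sr : R;
  Mtx : nat;
  Nsc : nat;
  Tper : R;
  Df : R;
  Pow : R;
  sigma2 : R;
  prec : nat -> 'cV[R[i]]_Ns;
  pilot : nat -> nat -> R[i];
  p_s : 'cV[R]_3;
  vel : 'cV[R]_3;
  p_r : 'cV[R]_3;
  Qs : 'M[R]_3;                 (* satellite orientation: columns = body axes *)
  Qr : 'M[R]_3                  (* RIS orientation: columns = body axes *)
}.

Section Model.
Variable R : realType.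
Variable S : sysParams R.

Definition steer K (Pm : 'M[R]_(3, K)) (az el : R) : 'cV[R[i]]_K :=
  \col_k expj (- (2 * pi * fc S / cl S) * (Pm^T *m tvec az el) k 0).

Definition a_s (az el : R) := steer (Ps S) az el.
Definition a_r (az el : R) := steer (Pr S) az el.

Definition b_r (az el : R) : 'cV[R[i]]_(Nr S) :=
  \col_k (a_r az el k 0 * a_r (ph_sr_az S) (ph_sr_el S) k 0).

(* channel parameter vector gamma in R^11, indices:
   0 tau_su, 1 th_su^az, 2 th_su^el, 3 tau_sru, 4 ph_ru^az, 5 ph_ru^el,
   6 nu_su, 7 Re a_su, 8 Im a_su, 9 Re a_sru, 10 Im a_sru *)
Definition gam (g : 'cV[R]_11) (k : nat) : R := g (@inord 10 k) 0.

Definition mu (g : 'cV[R]_11) (w : 'cV[R[i]]_(Nr S)) (m n : nat) : R[i] :=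
  let t := m%:R * Tper S in
  let f := n%:R * Df S in
  let alpha_su : R[i] := Complex (gam g 7) (gam g 8) in
  let alpha_sru : R[i] := Complex (gam g 9) (gam g 10) in
  let hf : R[i] :=
    alpha_su * expj (2 * pi * (t * gam g 6 - f * gam g 0))
      * ((a_s (gam g 1) (gam g 2))^T *m prec S m) 0 0
    + alpha_sru * expj (2 * pi * (t * nu_sr S - f * gam g 3))
      * ((a_r (gam g 4) (gam g 5))^T *m diag_mx w^T
           *m a_r (ph_sr_az S) (ph_sr_el S)) 0 0
      * ((a_s (th_sr_az S) (th_sr_el S))^T *m prec S m) 0 0 in
  (Num.sqrt (Pow S))%:C%C * hf * pilot S m n.

Definition dmu (g : 'cV[R]_11) (w : 'cV[R[i]]_(Nr S)) (m n : nat) (k : 'I_11)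
  : R[i] := cderiv (fun x => mu (updc g k x) w m n) (g k 0).

Definition Jgam (g : 'cV[R]_11) (w : 'cV[R[i]]_(Nr S)) : 'M[R]_11 :=
  \matrix_(k, l) (2 / sigma2 S *
    \sum_(1 <= m < (Mtx S).+1) \sum_(1 <= n < (Nsc S).+1)
      @complex.Re R (dmu g w m n k * conjc (dmu g w m n l))).

(* location parameter eta in R^8, indices:
   0..2 p_u, 3 Delta, 4 Re a_su, 5 Im a_su, 6 Re a_sru, 7 Im a_sru *)
Definition eta_pu (e : 'cV[R]_8) : 'cV[R]_3 := \col_(i < 3) e (@inord 7 i) 0.

Definition lambda : R := cl S / fc S.

Definition gamma_of_eta (e : 'cV[R]_8) : 'cV[R]_11 :=
  let pu := eta_pu e in
  let Delta := e (@inord 7 3) 0 in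
  let dsu := (Qs S)^T *m (pu - p_s S) in
  let dru := (Qr S)^T *m (pu - p_r S) in
  \col_(i < 11) nth 0
    [:: vnorm (p_s S - pu) / cl S + Delta;
        dir_az dsu; dir_el dsu;
        (vnorm (p_s S - p_r S) + vnorm (p_r S - pu)) / cl S + Delta;
        dir_az dru; dir_el dru;
        vdot (vel S) (pu - p_s S) / (lambda * vnorm (pu - p_s S));
        e (@inord 7 4) 0; e (@inord 7 5) 0; e (@inord 7 6) 0; e (@inord 7 7) 0]
    i.

Definition Tmat (e : 'cV[R]_8) : 'M[R]_(8, 11) :=
  \matrix_(i, k) derive1 (fun x => gamma_of_eta (updc e i x) k 0) (e i 0).

Definition Jeta (e : 'cV[R]_8) (w : 'cV[R[i]]_(Nr S)) : 'M[R]_8 :=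
  Tmat e *m Jgam (gamma_of_eta e) w *m (Tmat e)^T.

Definition Bmat (g : 'cV[R]_11) : 'M[R[i]]_(Nr S, 3) :=
  let az := gam g 4 in let el := gam g 5 in
  \matrix_(k, j) conjc (nth 0
    [:: b_r az el k 0;
        cderiv (fun x => b_r x el k 0) az;
        cderiv (fun x => b_r az x k 0) el] j).

Definition PiB (g : 'cV[R]_11) : 'M[R[i]]_(Nr S) :=
  Bmat g *m invmx (hadj (Bmat g) *m Bmat g) *m hadj (Bmat g).

End Model.

Arguments mu {R} S g w m n.
Arguments dmu {R} S g w m n k.
Arguments Jgam {R} S g w.
Arguments gamma_of_eta {R} S e.
Arguments Tmat {R} S e.
Arguments Jeta {R} S e w.
Arguments Bmat {R} S g.
Arguments PiB {R} S g.
Arguments b_r {R} S az el.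

(* Main.v *)
Require Import Defs.
From HB Require Import structures.
From mathcomp Require Import all_boot all_order all_algebra.
From mathcomp Require Import all_classical all_reals.
From mathcomp Require Import topology normedtype derive sequences exp trigo.
From mathcomp Require Import complex.
From mathcomp Require Import ring lra.
Set Implicit Arguments. Unset Strict Implicit. Unset Printing Implicit Defensive.
Import Order.TTheory GRing.Theory Num.Theory.
Import numFieldNormedType.Exports.
Local Open Scope ring_scope.
Section An.
Variable R : realType.
Implicit Types (f g : R -> R) (x : R).

Lemma dvD f g x : derivable f x 1 -> derivable g x 1 ->
  derivable (fun y => f y + g y) x 1.
Proof. exact: derivableD. Qed.
Lemma dvB f g x : derivable f x 1 -> derivable g x 1 ->
  derivable (fun y => f y - g y) x 1.
Proof. exact: derivableB. Qed.
Lemma dvM f g x : derivable f x 1 -> derivable g x 1 ->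
  derivable (fun y => f y * g y) x 1.
Proof. exact: derivableM. Qed.
Lemma dvC (c : R) x : derivable (fun _ : R => c) x 1.
Proof. exact: derivable_cst. Qed.
Lemma dvI x : derivable (fun y : R => y) x 1.
Proof. exact: derivable_id. Qed.
Lemma dvcos f x : derivable f x 1 -> derivable (fun y => cos (f y)) x 1.
Proof.
move=> /derivable1_diffP df; apply/derivable1_diffP.
have dc : differentiable (@cos R) (f x) by apply/derivable1_diffP/derivable_cos.
exact: (differentiable_comp df dc).
Qed.
Lemma dvsin f x : derivable f x 1 -> derivable (fun y => sin (f y)) x 1.
Proof.
move=> /derivable1_diffP df; apply/derivable1_diffP.
have dc : differentiable (@sin R) (f x) by apply/derivable1_diffP/derivable_sin.
exact: (differentiable_comp df dc).
Qed.

Lemma d1D f g x : derivable f x 1 -> derivable g x 1 ->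
  derive1 (fun y => f y + g y) x = derive1 f x + derive1 g x.
Proof. by move=> df dg; rewrite !derive1E (deriveD df dg). Qed.
Lemma d1B f g x : derivable f x 1 -> derivable g x 1 ->
  derive1 (fun y => f y - g y) x = derive1 f x - derive1 g x.
Proof. by move=> df dg; rewrite !derive1E (deriveB df dg). Qed.
Lemma d1Mr f (c : R) x : derivable f x 1 ->
  derive1 (fun y => f y * c) x = derive1 f x * c.
Proof. exact: derive1Mr. Qed.

Lemma d1_add0 f h x : derivable h x 1 -> derive1 h x = 0 ->
  derive1 (fun y => f y + h y) x = derive1 f x.
Proof.
move=> dh h0.
have qh : ((fun t : R => t^-1 *: (h (t + x) - h x)) @ 0^' --> (0:R))%classic.
  have dh' : cvg ((fun t : R => t^-1 *: (h (t + x) - h x)) @ 0^')%classic.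
    move: dh; rewrite /derivable.
    have -> : (fun t : R => t^-1 *: ((h \o shift x) (t *: 1) - h x)) =
            (fun t : R => t^-1 *: (h (t + x) - h x)).
      by apply/funext => t; rewrite /= -[t *: 1]/(t * 1) mulr1.
    by [].
  have : ((fun t : R => t^-1 *: (h (t + x) - h x)) @ 0^' --> derive1 h x)%classic := dh'.
  by rewrite h0.
rewrite /derive1 /lim /lim_in; congr (get _).
apply/funext => l; apply/propext; split => H.
- have -> : (fun t : R => t^-1 *: (f (t + x) - f x)) =
     (fun t : R => t^-1 *: ((f (t + x) + h (t+x)) - (f x + h x)) - t^-1 *: (h (t + x) - h x)).
    by apply/funext => t; rewrite -scalerBr; congr (_ *: _); ring.
  by rewrite -[l]subr0; apply: cvgB.
- have -> : (fun t : R => t^-1 *: ((f (t + x) + h (t+x)) - (f x + h x))) =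
     (fun t : R => t^-1 *: (f (t + x) - f x) + t^-1 *: (h (t + x) - h x)).
    by apply/funext => t; rewrite -scalerDr; congr (_ *: _); ring.
  by rewrite -[l]addr0; apply: cvgD.
Qed.

Lemma dsum (I : Type) (r : seq I) (F : I -> R -> R) x :
  (forall k, derivable (F k) x 1) ->
  derivable (fun y => \sum_(k <- r) F k y) x 1 /\
  derive1 (fun y => \sum_(k <- r) F k y) x = \sum_(k <- r) derive1 (F k) x.
Proof.
move=> dF; elim: r => [|a r [IH1 IH2]].
  have -> : (fun y : R => \sum_(k <- [::]) F k y) = (fun _ => 0).
    by apply/funext => y; rewrite big_nil.
  by rewrite big_nil; split; [exact: dvC | exact: (derive1_cst (0:R))].
have -> : (fun y : R => \sum_(k <- a :: r) F k y) =
          (fun y => F a y + \sum_(k <- r) F k y).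
  by apply/funext => y; rewrite big_cons.
rewrite big_cons; split; first exact: dvD.
by rewrite d1D // IH2.
Qed.
End An.

Section Cx.
Variable R : realType.
Definition cderiv' (g : R -> R[i]) (x : R) : R[i] :=
  Complex (derive1 (fun y => @complex.Re R (g y)) x) (derive1 (fun y => @complex.Im R (g y)) x).

Lemma ReM (a b : R[i]) : complex.Re (a * b) = complex.Re a * complex.Re b - complex.Im a * complex.Im b.
Proof. by case: a; case: b. Qed.
Lemma ImM (a b : R[i]) : complex.Im (a * b) = complex.Re a * complex.Im b + complex.Im a * complex.Re b.
Proof. by case: a; case: b. Qed.
Lemma ReD (a b : R[i]) : complex.Re (a + b) = complex.Re a + complex.Re b.
Proof. by case: a; case: b. Qed.
Lemma ImD (a b : R[i]) : complex.Im (a + b) = complex.Im a + complex.Im b.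
Proof. by case: a; case: b. Qed.
Lemma Re_sum (I : Type) (r : seq I) (F : I -> R[i]) :
  complex.Re (\sum_(k <- r) F k) = \sum_(k <- r) complex.Re (F k).
Proof. by elim: r => [|a r IH]; rewrite ?big_nil // !big_cons ReD IH. Qed.
Lemma Im_sum (I : Type) (r : seq I) (F : I -> R[i]) :
  complex.Im (\sum_(k <- r) F k) = \sum_(k <- r) complex.Im (F k).
Proof. by elim: r => [|a r IH]; rewrite ?big_nil // !big_cons ImD IH. Qed.

Lemma Dcomplex (I : Type) (r : seq I) (F : I -> R -> R[i]) (u : I -> R[i]) x :
  (forall k, derivable (fun y => complex.Re (F k y)) x 1) ->
  (forall k, derivable (fun y => complex.Im (F k y)) x 1) ->
  derivable (fun y => complex.Re (\sum_(k <- r) F k y * u k)) x 1 /\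
  derivable (fun y => complex.Im (\sum_(k <- r) F k y * u k)) x 1 /\
  cderiv' (fun y => \sum_(k <- r) F k y * u k) x = \sum_(k <- r) cderiv' (F k) x * u k.
Proof.
move=> dRe dIm.
have eRe : (fun y => complex.Re (\sum_(k <- r) F k y * u k)) =
  (fun y => \sum_(k <- r) (complex.Re (F k y) * complex.Re (u k) - complex.Im (F k y) * complex.Im (u k))).
  by apply/funext => y; rewrite Re_sum; apply: eq_bigr => k _; rewrite ReM.
have eIm : (fun y => complex.Im (\sum_(k <- r) F k y * u k)) =
  (fun y => \sum_(k <- r) (complex.Re (F k y) * complex.Im (u k) + complex.Im (F k y) * complex.Re (u k))).
  by apply/funext => y; rewrite Im_sum; apply: eq_bigr => k _; rewrite ImM.
have dA : forall k, derivable (fun y => complex.Re (F k y) * complex.Re (u k) - complex.Im (F k y) * complex.Im (u k)) x 1.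
  by move=> k; apply: dvB; apply: dvM => //; exact: dvC.
have dB : forall k, derivable (fun y => complex.Re (F k y) * complex.Im (u k) + complex.Im (F k y) * complex.Re (u k)) x 1.
  by move=> k; apply: dvD; apply: dvM => //; exact: dvC.
have [d1 e1] := dsum r dA.
have [d2 e2] := dsum r dB.
split; first by rewrite eRe.
split; first by rewrite eIm.
rewrite /cderiv' /= eRe eIm e1 e2.
set T := \sum_(k <- r) _ * u k.
have -> : T = Complex (complex.Re T) (complex.Im T) by case: T.
congr Complex.
  rewrite /T Re_sum; apply: eq_bigr => k _.
  have h1 := dvM (dRe k) (@dvC R (complex.Re (u k)) x).
  have h2 := dvM (dIm k) (@dvC R (complex.Im (u k)) x).
  rewrite (d1B h1 h2) (d1Mr _ (dRe k)) (d1Mr _ (dIm k)).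
  by rewrite ReM.
rewrite /T Im_sum; apply: eq_bigr => k _.
have h1 := dvM (dRe k) (@dvC R (complex.Im (u k)) x).
have h2 := dvM (dIm k) (@dvC R (complex.Re (u k)) x).
rewrite (d1D h1 h2) (d1Mr _ (dRe k)) (d1Mr _ (dIm k)).
by rewrite ImM.
Qed.
End Cx.

Section Lin.
Variable R : realType.

Lemma hadjK m n (A : 'M[R[i]]_(m, n)) : hadj (hadj A) = A.
Proof. by apply/matrixP => i j; rewrite /hadj !mxE conjcK. Qed.

Lemma hadjM m n p (A : 'M[R[i]]_(m, n)) (B : 'M[R[i]]_(n, p)) :
  hadj (A *m B) = hadj B *m hadj A.
Proof.
apply/matrixP => i j; rewrite /hadj !mxE rmorph_sum.
by apply: eq_bigr => k _; rewrite !mxE rmorphM mulrC.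
Qed.

Lemma selfdot0 n (y : 'rV[R[i]]_n) : (y *m hadj y) 0 0 = 0 -> y = 0.
Proof.
rewrite mxE => H.
have HR : \sum_j (complex.Re (y 0 j) ^+ 2 + complex.Im (y 0 j) ^+ 2) = 0.
  have := congr1 (@complex.Re R) H.
  have Re_sum : forall (r : seq 'I_n) (F : 'I_n -> R[i]),
      complex.Re (\sum_(k <- r) F k) = \sum_(k <- r) complex.Re (F k).
    by move=> r F; elim: r => [|a r IH]; rewrite ?big_nil // !big_cons -IH; case: (F a); case: (\sum_(k <- r) F k).
  rewrite Re_sum => E; rewrite -[RHS]/(complex.Re (0:R[i])) -E; apply: eq_bigr => j _.
  rewrite /hadj !mxE; case: (y 0 j) => a b /=; ring.
apply/matrixP => i j; rewrite (ord1 i) mxE.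
have P0 : forall j, true -> 0 <= complex.Re (y 0 j) ^+ 2 + complex.Im (y 0 j) ^+ 2.
  by move=> k _; rewrite addr_ge0 // sqr_ge0.
have := psumr_eq0P P0 HR isT (i := j).
case: (y 0 j) => a b /= /eqP; rewrite paddr_eq0 ?sqr_ge0 // !sqrf_eq0 => /andP[/eqP -> /eqP ->].
done.
Qed.

Lemma hadj0 m n : hadj (0 : 'M[R[i]]_(m, n)) = 0.
Proof. by apply/matrixP => i j; rewrite /hadj !mxE conjc0. Qed.

Lemma hB_unit m (B : 'M[R[i]]_(m, 3)) : \rank B = 3%N -> hadj B *m B \in unitmx.
Proof.
move=> rB; rewrite unitmxE unitfE; apply/negP => /det0P [x nx0 xM].
have y0 : x *m hadj B = 0.
  apply: selfdot0; rewrite hadjM hadjK !mulmxA -(mulmxA x) xM mul0mx.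
  by rewrite mxE.
have Bx : B *m hadj x = 0 by rewrite -[B]hadjK -hadjM y0 hadj0.
have rf : row_free B^T by rewrite /row_free mxrank_tr rB.
have : (hadj x)^T *m B^T = 0 *m B^T by rewrite -trmx_mul Bx mul0mx trmx0.
move=> /(row_free_inj rf) /(congr1 trmx); rewrite trmxK trmx0 => hx0.
by move: nx0; rewrite -[x]hadjK hx0 hadj0 eqxx.
Qed.

Lemma proj_inv m (B : 'M[R[i]]_(m, 3)) (w1 w2 : 'cV[R[i]]_m) : \rank B = 3%N ->
  B *m invmx (hadj B *m B) *m hadj B *m w1 = B *m invmx (hadj B *m B) *m hadj B *m w2 ->
  hadj B *m w1 = hadj B *m w2.
Proof.
move=> rB E; have U := hB_unit rB.
have K : hadj B *m (B *m invmx (hadj B *m B) *m hadj B) = hadj B.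
  by rewrite !mulmxA mulmxV // mul1mx.
by rewrite -{1}K -mulmxA E mulmxA K.
Qed.
End Lin.

Section Mod.
Variable R : realType.
Variable S : sysParams R.

Lemma gam_upd (g : 'cV[R]_11) (k : 'I_11) x j :
  gam (updc g k x) j = if @inord 10 j == k then x else gam g j.
Proof. by rewrite /gam /updc mxE. Qed.

Lemma ReexpjM t (z : R[i]) : complex.Re (expj t * z) = cos t * complex.Re z - sin t * complex.Im z.
Proof. by case: z => a b; rewrite /expj /=. Qed.
Lemma ImexpjM t (z : R[i]) : complex.Im (expj t * z) = cos t * complex.Im z + sin t * complex.Re z.
Proof. by case: z => a b; rewrite /expj /=; ring. Qed.

Lemma phE K (Pm : 'M[R]_(3, K)) az el k :
  (Pm^T *m tvec az el) k 0 =
  Pm 0 k * (cos az * cos el) + Pm 1 k * (sin az * cos el) + Pm 2%:R k * sin el.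
Proof.
rewrite !mxE !big_ord_recr big_ord0 /= !mxE /= add0r.
by congr (Pm _ k * _ + Pm _ k * _ + Pm _ k * _); apply/val_inj.
Qed.

Definition cst_ph : R := - (2 * pi * fc S / cl S).
Definition zk k : R[i] := a_r S (ph_sr_az S) (ph_sr_el S) k 0.

Lemma b_rE az el k :
  b_r S az el k 0 = expj (cst_ph * ((Pr S)^T *m tvec az el) k 0) * zk k.
Proof. by rewrite /b_r mxE /a_r /steer mxE. Qed.




Lemma dph_az (P0 P1 P2 ce se : R) x :
  derivable (fun y => P0 * (cos y * ce) + P1 * (sin y * ce) + P2 * se) x 1.
Proof.
have h0 : derivable (fun y : R => cos y) x 1 := dvcos (@dvI R x).
have h1 : derivable (fun y : R => cos y * ce) x 1 := dvM h0 (@dvC R ce x).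
have h2 : derivable (fun y : R => P0 * (cos y * ce)) x 1 := dvM (@dvC R P0 x) h1.
have g0 : derivable (fun y : R => sin y) x 1 := dvsin (@dvI R x).
have g1 : derivable (fun y : R => sin y * ce) x 1 := dvM g0 (@dvC R ce x).
have g2 : derivable (fun y : R => P1 * (sin y * ce)) x 1 := dvM (@dvC R P1 x) g1.
have k2 : derivable (fun y : R => P2 * se) x 1 := @dvC R (P2 * se) x.
have s1 : derivable (fun y : R => P0 * (cos y * ce) + P1 * (sin y * ce)) x 1 := dvD h2 g2.
exact: (dvD s1 k2).
Qed.
Lemma dph_el (P0 P1 P2 ca sa : R) x :
  derivable (fun y => P0 * (ca * cos y) + P1 * (sa * cos y) + P2 * sin y) x 1.
Proof.
have h0 : derivable (fun y : R => cos y) x 1 := dvcos (@dvI R x).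
have h1 : derivable (fun y : R => ca * cos y) x 1 := dvM (@dvC R ca x) h0.
have h2 : derivable (fun y : R => P0 * (ca * cos y)) x 1 := dvM (@dvC R P0 x) h1.
have g1 : derivable (fun y : R => sa * cos y) x 1 := dvM (@dvC R sa x) h0.
have g2 : derivable (fun y : R => P1 * (sa * cos y)) x 1 := dvM (@dvC R P1 x) g1.
have g0 : derivable (fun y : R => sin y) x 1 := dvsin (@dvI R x).
have k2 : derivable (fun y : R => P2 * sin y) x 1 := dvM (@dvC R P2 x) g0.
have s1 : derivable (fun y : R => P0 * (ca * cos y) + P1 * (sa * cos y)) x 1 := dvD h2 g2.
exact: (dvD s1 k2).
Qed.

Lemma dtrigB (c A B : R) (ph : R -> R) x : derivable ph x 1 ->
  derivable (fun y => cos (c * ph y) * A - sin (c * ph y) * B) x 1.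
Proof.
move=> dph.
have dcp : derivable (fun y => c * ph y) x 1 := dvM (@dvC R c x) dph.
have a1 : derivable (fun y => cos (c * ph y)) x 1 := dvcos dcp.
have a2 : derivable (fun y => sin (c * ph y)) x 1 := dvsin dcp.
have b1 : derivable (fun y => cos (c * ph y) * A) x 1 := dvM a1 (@dvC R A x).
have b2 : derivable (fun y => sin (c * ph y) * B) x 1 := dvM a2 (@dvC R B x).
exact: (dvB b1 b2).
Qed.
Lemma dtrigD (c A B : R) (ph : R -> R) x : derivable ph x 1 ->
  derivable (fun y => cos (c * ph y) * A + sin (c * ph y) * B) x 1.
Proof.
move=> dph.
have dcp : derivable (fun y => c * ph y) x 1 := dvM (@dvC R c x) dph.
have a1 : derivable (fun y => cos (c * ph y)) x 1 := dvcos dcp.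
have a2 : derivable (fun y => sin (c * ph y)) x 1 := dvsin dcp.
have b1 : derivable (fun y => cos (c * ph y) * A) x 1 := dvM a1 (@dvC R A x).
have b2 : derivable (fun y => sin (c * ph y) * B) x 1 := dvM a2 (@dvC R B x).
exact: (dvD b1 b2).
Qed.

Lemma dRe_az el k x : derivable (fun y => complex.Re (b_r S y el k 0)) x 1.
Proof.
have -> : (fun y => complex.Re (b_r S y el k 0)) = (fun y => cos (cst_ph * ((Pr S) 0 k * (cos y * cos el) + (Pr S) 1 k * (sin y * cos el) + (Pr S) 2%:R k * sin el)) * complex.Re (zk k) - sin (cst_ph * ((Pr S) 0 k * (cos y * cos el) + (Pr S) 1 k * (sin y * cos el) + (Pr S) 2%:R k * sin el)) * complex.Im (zk k)).
  by apply/funext => y; rewrite b_rE phE ReexpjM.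
apply: dtrigB; exact: dph_az.
Qed.

Lemma dIm_az el k x : derivable (fun y => complex.Im (b_r S y el k 0)) x 1.
Proof.
have -> : (fun y => complex.Im (b_r S y el k 0)) = (fun y => cos (cst_ph * ((Pr S) 0 k * (cos y * cos el) + (Pr S) 1 k * (sin y * cos el) + (Pr S) 2%:R k * sin el)) * complex.Im (zk k) + sin (cst_ph * ((Pr S) 0 k * (cos y * cos el) + (Pr S) 1 k * (sin y * cos el) + (Pr S) 2%:R k * sin el)) * complex.Re (zk k)).
  by apply/funext => y; rewrite b_rE phE ImexpjM.
apply: dtrigD; exact: dph_az.
Qed.

Lemma dRe_el az k x : derivable (fun y => complex.Re (b_r S az y k 0)) x 1.
Proof.
have -> : (fun y => complex.Re (b_r S az y k 0)) = (fun y => cos (cst_ph * ((Pr S) 0 k * (cos az * cos y) + (Pr S) 1 k * (sin az * cos y) + (Pr S) 2%:R k * sin y)) * complex.Re (zk k) - sin (cst_ph * ((Pr S) 0 k * (cos az * cos y) + (Pr S) 1 k * (sin az * cos y) + (Pr S) 2%:R k * sin y)) * complex.Im (zk k)).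
  by apply/funext => y; rewrite b_rE phE ReexpjM.
apply: dtrigB; exact: dph_el.
Qed.

Lemma dIm_el az k x : derivable (fun y => complex.Im (b_r S az y k 0)) x 1.
Proof.
have -> : (fun y => complex.Im (b_r S az y k 0)) = (fun y => cos (cst_ph * ((Pr S) 0 k * (cos az * cos y) + (Pr S) 1 k * (sin az * cos y) + (Pr S) 2%:R k * sin y)) * complex.Im (zk k) + sin (cst_ph * ((Pr S) 0 k * (cos az * cos y) + (Pr S) 1 k * (sin az * cos y) + (Pr S) 2%:R k * sin y)) * complex.Re (zk k)).
  by apply/funext => y; rewrite b_rE phE ImexpjM.
apply: dtrigD; exact: dph_el.
Qed.
End Mod.
Section Mod2.
Variable R : realType.
Variable S : sysParams R.

Lemma ReDM (a b c : R[i]) : complex.Re (a + c * b) =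
  complex.Re a + (complex.Re c * complex.Re b - complex.Im c * complex.Im b).
Proof. by case: a => ? ?; case: b => ? ?; case: c => ? ?. Qed.
Lemma ImDM (a b c : R[i]) : complex.Im (a + c * b) =
  complex.Im a + (complex.Re c * complex.Im b + complex.Im c * complex.Re b).
Proof. by case: a => ? ?; case: b => ? ?; case: c => ? ?. Qed.

Lemma d1Ml' (f : R -> R) (r : R) x : derivable f x 1 ->
  derive1 (fun y => r * f y) x = r * derive1 f x.
Proof. move=> df; exact: derive1Ml. Qed.

Lemma cderiv_add0 (f h : R -> R[i]) (c : R[i]) a :
  derivable (fun y => complex.Re (h y)) a 1 ->
  derivable (fun y => complex.Im (h y)) a 1 ->
  cderiv h a = 0 ->
  cderiv (fun x => f x + c * h x) a = cderiv f a.
Proof.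
move=> dR dI h0.
have hR : derive1 (fun y => complex.Re (h y)) a = 0 by move: h0; rewrite /cderiv => -[].
have hI : derive1 (fun y => complex.Im (h y)) a = 0 by move: h0; rewrite /cderiv => -[].
have e1 : (fun y => complex.Re (f y + c * h y)) =
  (fun y => complex.Re (f y) + (complex.Re c * complex.Re (h y) - complex.Im c * complex.Im (h y))).
  by apply/funext => y; rewrite ReDM.
have e2 : (fun y => complex.Im (f y + c * h y)) =
  (fun y => complex.Im (f y) + (complex.Re c * complex.Im (h y) + complex.Im c * complex.Re (h y))).
  by apply/funext => y; rewrite ImDM.
have a1 : derivable (fun y => complex.Re c * complex.Re (h y)) a 1 := dvM (@dvC R (complex.Re c) a) dR.
have a2 : derivable (fun y => complex.Im c * complex.Im (h y)) a 1 := dvM (@dvC R (complex.Im c) a) dI.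
have a3 : derivable (fun y => complex.Re c * complex.Im (h y)) a 1 := dvM (@dvC R (complex.Re c) a) dI.
have a4 : derivable (fun y => complex.Im c * complex.Re (h y)) a 1 := dvM (@dvC R (complex.Im c) a) dR.
rewrite /cderiv e1 e2 (d1_add0 _ (dvB a1 a2)) ?(d1_add0 _ (dvD a3 a4)) //.
  rewrite (d1D a3 a4).
  rewrite (d1Ml' (complex.Re c) dI).
  rewrite (d1Ml' (complex.Im c) dR).
  by rewrite hR hI !mulr0 addr0.
rewrite (d1B a1 a2).
rewrite (d1Ml' (complex.Re c) dR).
rewrite (d1Ml' (complex.Im c) dI).
by rewrite hR hI !mulr0 subr0.
Qed.

Lemma sbE az el (w : 'cV[R[i]]_(Nr S)) :
  ((a_r S az el)^T *m diag_mx w^T *m a_r S (ph_sr_az S) (ph_sr_el S)) 0 0 =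
  \sum_k b_r S az el k 0 * w k 0.
Proof.
rewrite mxE; apply: eq_bigr => k _.
rewrite mul_mx_diag !mxE /b_r ?mxE; ring.
Qed.

Definition Qf (g : 'cV[R]_11) (m n : nat) : R[i] :=
  (Num.sqrt (Pow S))%:C%C * (Complex (gam g 9) (gam g 10) *
    expj (2 * pi * (m%:R * Tper S * nu_sr S - n%:R * Df S * gam g 3))) *
  ((a_s S (th_sr_az S) (th_sr_el S))^T *m prec S m) 0 0 * pilot S m n.

Lemma muD g (w1 w2 : 'cV[R[i]]_(Nr S)) m n :
  mu S g w1 m n = mu S g w2 m n +
     Qf g m n * \sum_k b_r S (gam g 4) (gam g 5) k 0 * (w1 k 0 - w2 k 0).
Proof.
have -> : \sum_k b_r S (gam g 4) (gam g 5) k 0 * (w1 k 0 - w2 k 0) =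
  \sum_k b_r S (gam g 4) (gam g 5) k 0 * w1 k 0 - \sum_k b_r S (gam g 4) (gam g 5) k 0 * w2 k 0.
  by rewrite -sumrB; apply: eq_bigr => k _; rewrite mulrBr.
rewrite /mu /Qf /= !sbE; ring.
Qed.
End Mod2.

Section Mod3.
Variable R : realType.
Variable S : sysParams R.

Lemma hadjE m n (A : 'M[R[i]]_(m, n)) i j : hadj A i j = conjc (A j i).
Proof. by rewrite /hadj !mxE. Qed.
Lemma BmatE g k j : Bmat S g k j = conjc (nth 0 [:: b_r S (gam g 4) (gam g 5) k 0;
        cderiv (fun x => b_r S x (gam g 5) k 0) (gam g 4);
        cderiv (fun x => b_r S (gam g 4) x k 0) (gam g 5)] j).
Proof. by rewrite /Bmat mxE. Qed.

Lemma Bcond g (w1 w2 : 'cV[R[i]]_(Nr S)) (j : 'I_3) :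
  hadj (Bmat S g) *m w1 = hadj (Bmat S g) *m w2 ->
  \sum_k nth 0 [:: b_r S (gam g 4) (gam g 5) k 0;
        cderiv (fun x => b_r S x (gam g 5) k 0) (gam g 4);
        cderiv (fun x => b_r S (gam g 4) x k 0) (gam g 5)] j * (w1 k 0 - w2 k 0) = 0.
Proof.
move=> /(congr1 (fun M : 'M[R[i]]_(3, 1) => M j 0)).
rewrite [LHS]mxE [RHS]mxE.
under eq_bigr do rewrite hadjE BmatE conjcK.
under [X in _ = X]eq_bigr do rewrite hadjE BmatE conjcK.
move=> H.
under eq_bigr do rewrite mulrBr.
by rewrite sumrB H subrr.
Qed.

Lemma inord_eqE a b : (a < 11)%N -> (b < 11)%N -> (@inord 10 a == @inord 10 b) = (a == b).
Proof.
move=> ha hb; apply/eqP/eqP => [E|->//].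
by have := congr1 (@nat_of_ord 11) E; rewrite !inordK.
Qed.

Lemma part1 g (w1 w2 : 'cV[R[i]]_(Nr S)) :
  hadj (Bmat S g) *m w1 = hadj (Bmat S g) *m w2 -> Jgam S g w1 = Jgam S g w2.
Proof.
move=> H.
have H0 : \sum_k b_r S (gam g 4) (gam g 5) k 0 * (w1 k 0 - w2 k 0) = 0 := Bcond (0 : 'I_3) H.
have H1 : \sum_k cderiv (fun x => b_r S x (gam g 5) k 0) (gam g 4) * (w1 k 0 - w2 k 0) = 0 := Bcond (1 : 'I_3) H.
have H2 : \sum_k cderiv (fun x => b_r S (gam g 4) x k 0) (gam g 5) * (w1 k 0 - w2 k 0) = 0 := Bcond (2 : 'I_3) H.
suff E : forall m n k, dmu S g w1 m n k = dmu S g w2 m n k.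
  have E' : dmu S g w1 = dmu S g w2.
    by apply/funext => m; apply/funext => n; apply/funext => k; exact: E.
  by rewrite /Jgam E'.
move=> m n k; rewrite /dmu.

have [k4|nk4] := eqVneq k (inord 4).
  rewrite k4.
  have G : forall x j, (j < 11)%N -> gam (updc g (inord 4) x) j = if j == 4%N then x else gam g j.
    by move=> x j hj; rewrite gam_upd inord_eqE.
  have -> : (fun x => mu S (updc g (inord 4) x) w1 m n) =
     (fun x => mu S (updc g (inord 4) x) w2 m n + Qf S g m n *
        \sum_k' b_r S x (gam g 5) k' 0 * (w1 k' 0 - w2 k' 0)).
    by apply/funext => x; rewrite (muD _ _ w2) /Qf !G.
  have [dR [dI dc]] := @Dcomplex R _ (index_enum 'I_(Nr S)) (fun k' y => b_r S y (gam g 5) k' 0)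
      (fun k' => w1 k' 0 - w2 k' 0) (gam g 4) (fun k' => dRe_az (el:=gam g 5) (k:=k') (x:=gam g 4))
      (fun k' => dIm_az (el:=gam g 5) (k:=k') (x:=gam g 4)).
  by apply: cderiv_add0 => //; exact: (etrans dc H1).
have [k5|nk5] := eqVneq k (inord 5).
  rewrite k5.
  have G : forall x j, (j < 11)%N -> gam (updc g (inord 5) x) j = if j == 5%N then x else gam g j.
    by move=> x j hj; rewrite gam_upd inord_eqE.
  have -> : (fun x => mu S (updc g (inord 5) x) w1 m n) =
     (fun x => mu S (updc g (inord 5) x) w2 m n + Qf S g m n *
        \sum_k' b_r S (gam g 4) x k' 0 * (w1 k' 0 - w2 k' 0)).
    by apply/funext => x; rewrite (muD _ _ w2) /Qf !G.
  have [dR [dI dc]] := @Dcomplex R _ (index_enum 'I_(Nr S)) (fun k' y => b_r S (gam g 4) y k' 0)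
      (fun k' => w1 k' 0 - w2 k' 0) (gam g 5) (fun k' => dRe_el (az:=gam g 4) (k:=k') (x:=gam g 5))
      (fun k' => dIm_el (az:=gam g 4) (k:=k') (x:=gam g 5)).
  by apply: cderiv_add0 => //; exact: (etrans dc H2).
have G4 : forall x, gam (updc g k x) 4 = gam g 4.
  by move=> x; rewrite gam_upd eq_sym (negbTE nk4).
have G5 : forall x, gam (updc g k x) 5 = gam g 5.
  by move=> x; rewrite gam_upd eq_sym (negbTE nk5).
have -> : (fun x => mu S (updc g k x) w1 m n) = (fun x => mu S (updc g k x) w2 m n).
  by apply/funext => x; rewrite (muD _ _ w2) G4 G5 H0 mulr0 addr0.
by [].
Qed.
End Mod3.


Unset Implicit Arguments.

Theorem mainTheorem1 (R : realType) (S : sysParams R) :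
  0 < fc S -> 0 < cl S -> 0 < Pow S -> 0 < sigma2 S ->
  (* J_gamma depends on omega only through B^H omega *)
  (forall (g : 'cV[R]_11) (w1 w2 : 'cV[R[i]]_(Nr S)),
      hadj (Bmat S g) *m w1 = hadj (Bmat S g) *m w2 ->
      Jgam S g w1 = Jgam S g w2) /\
  (* in particular it does not depend on Pi_B^perp omega *)
  (forall (g : 'cV[R]_11) (w1 w2 : 'cV[R[i]]_(Nr S)),
      \rank (Bmat S g) = 3%N ->
      PiB S g *m w1 = PiB S g *m w2 ->
      Jgam S g w1 = Jgam S g w2) /\
  (* and consequently J_eta does not either *)
  (forall (e : 'cV[R]_8) (w1 w2 : 'cV[R[i]]_(Nr S)),
      \rank (Bmat S (gamma_of_eta S e)) = 3%N ->
      PiB S (gamma_of_eta S e) *m w1 = PiB S (gamma_of_eta S e) *m w2 ->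
      Jgam S (gamma_of_eta S e) w1 = Jgam S (gamma_of_eta S e) w2 /\
      Jeta S e w1 = Jeta S e w2).
Proof.
move=> _ _ _ _.
split; first by move=> g w1 w2; exact: part1.
split.
  by move=> g w1 w2 rB E; apply: part1; exact: (proj_inv rB E).
move=> e w1 w2 rB E.
have J : Jgam S (gamma_of_eta S e) w1 = Jgam S (gamma_of_eta S e) w2.
  by apply: part1; exact: (proj_inv rB E).
split; first exact: J.
by rewrite /Jeta J.
Qed.
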